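(* Let $M$ be a Hausdorff space, $C_b(M)$ the $C^\ast$-algebra of bounded continuous functions $M\to\mathbb{C}$, and $C^{pt}(\mathcal{Q}(\mathcal{T}(M)))$ the $C^\ast$-subalgebra of $C(\mathcal{Q}(\mathcal{T}(M)))$ consisting of all continuous $\psi:\mathcal{Q}(\mathcal{T}(M))\to\mathbb{C}$ that are constant on each fibre of $pt:\mathcal{Q}^{pt}(\mathcal{T}(M))\to M$. Then the map \[ f_\ast:C_b(M)\to C^{pt}(\mathcal{Q}(\mathcal{T}(M))),\qquad \varphi\mapsto f_{E^{\varphi}}:=f_{E^{\mathrm{Re}\,\varphi}}+i\,f_{E^{\mathrm{Im}\,\varphi}}, \] is a $\ast$-isomorphism of $C^\ast$-algebras.
   Context: $\mathcal{T}(M)$ is the lattice of open subsets of $M$. A quasipoint of $\mathcal{T}(M)$ is a maximal dual ideal (maximal nonempty family of open sets not containing $\emptyset$, upward closed and closed under finite intersections); $\mathcal{Q}(\mathcal{T}(M))$ is the set of quasipoints with topology having base $\{\mathfrak{B}\mid U\in\mathfrak{B}\}$, $U\in\mathcal{T}(M)$ (a compact space). $\mathfrak{B}$ is over $x\in M$ if $x\in\bigcap_{U\in\mathfrak{B}}\overline{U}$ (at most one such $x$ since $M$ is Hausdorff); $\mathcal{Q}^{pt}(\mathcal{T}(M))$ is the set of quasipoints over some point, and $pt(\mathfrak{B})=x$ if $\mathfrak{B}$ is over $x$. For a bounded continuous $\psi:M\to\mathbb{R}$, $E^\psi_\lambda:=\mathrm{int}\,\psi^{-1}(]-\infty,\lambda])$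 and $f_{E^\psi}(\mathfrak{B}):=\inf\{\lambda\in\mathbb{R}\mid E^\psi_\lambda\in\mathfrak{B}\}$. $E^\varphi$ denotes the complex spectral family $E^\varphi_{\lambda,\mu}=E^{\mathrm{Re}\,\varphi}_\lambda\cap E^{\mathrm{Im}\,\varphi}_\mu$. *)

(* Defs.v *)
From HB Require Import structures.
From mathcomp Require Import all_boot all_order all_algebra.
From mathcomp Require Import all_classical all_reals all_analysis.
From mathcomp Require Import complex.
Set Implicit Arguments. Unset Strict Implicit. Unset Printing Implicit Defensive.
Import Order.TTheory GRing.Theory Num.Theory.
Import numFieldTopology.Exports numFieldNormedType.Exports.
Local Open Scope classical_set_scope.
Local Open Scope ring_scope.

Section QP.
Variable M : topologicalType.

Definition dual_ideal (B : set (set M)) : Prop :=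
  [/\ (forall U, B U -> open U),
      B !=set0,
      ~ B set0,
      (forall U V, B U -> open V -> U `<=` V -> B V) &
      (forall U V, B U -> B V -> B (U `&` V))].

Definition is_quasipoint (B : set (set M)) : Prop :=
  dual_ideal B /\ (forall B', dual_ideal B' -> B `<=` B' -> B' = B).

Definition quasipoint := {B : set (set M) | is_quasipoint B}.

Definition qfam (B : quasipoint) : set (set M) := proj1_sig B.

Definition over (B : quasipoint) (x : M) : Prop :=
  forall U, qfam B U -> closure U x.

(* Continuity of psi : Q(T(M)) -> C w.r.t. the topology with base
   {B | U \in B}, U open: written out in neighbourhood form. *)
Definition qcontinuous (R : realType) (psi : quasipoint -> R[i]) : Prop :=
  forall (B : quasipoint) (e : R), 0 < e ->
    exists2 U, qfam B U &
      forall B' : quasipoint, qfam B' U -> `|psi B' - psi B| < e%:C%C.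

(* constant on each fibre of pt : Q^pt(T(M)) -> M *)
Definition pt_constant (T : Type) (psi : quasipoint -> T) : Prop :=
  forall (B1 B2 : quasipoint) (x : M), over B1 x -> over B2 x -> psi B1 = psi B2.

Definition spec_fam (R : realType) (psi : M -> R) (l : R) : set M :=
  interior [set x | psi x <= l].

Definition fE (R : realType) (psi : M -> R) (B : quasipoint) : R :=
  inf [set l : R | qfam B (spec_fam psi l)].

Definition fstar (R : realType) (phi : M -> R[i]) (B : quasipoint) : R[i] :=
  Complex (fE (fun x => complex.Re (phi x)) B) (fE (fun x => complex.Im (phi x)) B).

Definition Cb (R : realType) (phi : M -> R[i]) : Prop :=
  continuous (phi : M -> (R[i] : numClosedFieldType)) /\ exists r : R, forall x, `|phi x| <= r%:C%C.

Definition Cpt (R : realType) (psi : quasipoint -> R[i]) : Prop :=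
  qcontinuous psi /\ pt_constant psi.

End QP.

(* Main.v *)
Require Import Defs.
From HB Require Import structures.
From mathcomp Require Import all_boot all_order all_algebra.
From mathcomp Require Import all_classical all_reals all_analysis.
From mathcomp Require Import complex.
From mathcomp Require Import ring lra.
Import Order.TTheory GRing.Theory Num.Theory.
Import numFieldTopology.Exports numFieldNormedType.Exports.
Local Open Scope classical_set_scope.
Local Open Scope ring_scope.
Set Implicit Arguments. Unset Strict Implicit. Unset Printing Implicit Defensive.
Section QPBasics.
Variable M : topologicalType.
Implicit Types (B : quasipoint M) (U V W : set M).

Lemma qp_dual B : dual_ideal (qfam B).
Proof. by case: B => ? [? ?]. Qed.

Lemma qp_open B U : qfam B U -> open U.
Proof. by case: (qp_dual B) => h *; apply: h. Qed.

Lemma qp_set0 B : ~ qfam B set0.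
Proof. by case: (qp_dual B). Qed.

Lemma qp_up B U V : qfam B U -> open V -> U `<=` V -> qfam B V.
Proof. by case: (qp_dual B) => _ _ _ h _; apply: h. Qed.

Lemma qp_meet B U V : qfam B U -> qfam B V -> qfam B (U `&` V).
Proof. by case: (qp_dual B) => _ _ _ _ h; apply: h. Qed.

Lemma qp_setT B : qfam B setT.
Proof.
case: (qp_dual B) => _ [U hU] _ _ _.
exact: (qp_up hU openT (@subsetT _ U)).
Qed.

Lemma qp_neq0 B U : qfam B U -> U !=set0.
Proof.
move=> hU; apply/set0P/negP => /eqP h0.
by apply: (qp_set0 (B := B)); rewrite -h0.
Qed.

Lemma qp_maxP B U : open U -> (forall V, qfam B V -> V `&` U !=set0) -> qfam B U.
Proof.
move=> oU hm.
pose B' := fun W => open W /\ exists2 V, qfam B V & V `&` U `<=` W.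
have dB' : dual_ideal B'.
  split.
  - by move=> W [].
  - by exists setT; split; [exact: openT| exists setT => //; exact: qp_setT].
  - move=> [_ [V hV sV]]; have [x [hx1 hx2]] := hm V hV.
    by apply: (sV x).
  - move=> W1 W2 [_ [V hV sV]] oW2 s12; split => //; exists V => //.
    by move=> x /sV /s12.
  - move=> W1 W2 [op1 [V1 h1 s1]] [op2 [V2 h2 s2]]; split; first exact: openI.
    exists (V1 `&` V2); first exact: qp_meet.
    move=> x [[a b] c]; split; [apply: s1|apply: s2]; by split.
have sub : qfam B `<=` B'.
  move=> W hW; split; first exact: (qp_open hW).
  by exists W => // x [].
have e := (proj2 (svalP B)) B' dB' sub.
have : B' U by split => //; exists setT; [exact: qp_setT| move=> x []].
by rewrite e.
Qed.

Lemma qp_ext B U : open U -> ~ qfam B U -> qfam B (interior (~` U)).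
Proof.
move=> oU nU.
have [V hV hVU] : exists2 V, qfam B V & ~ (V `&` U !=set0).
  apply: contra_notP nU => h; apply: qp_maxP => // V hV.
  by apply: contra_notP h => h'; exists V.
apply: (qp_up hV); first exact: open_interior.
rewrite -open_subsetE; last exact: (qp_open hV).
by move=> x Vx Ux; apply: hVU; exists x.
Qed.

Lemma qp_disj B U : qfam B U -> ~ qfam B (interior (~` U)).
Proof.
move=> hU hW; have [x [Ux Wx]] := qp_neq0 (qp_meet hU hW).
exact: (interior_subset Wx).
Qed.

Lemma qp_extend (G : set (set M)) : dual_ideal G ->
  exists B : quasipoint M, G `<=` qfam B.
Proof.
move=> dG.
pose T := {F : set (set M) | dual_ideal F /\ G `<=` F}.
pose Rl := fun s t : T => `[< sval s `<=` sval t >].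
have [t tmax] : exists t : T, forall s : T, Rl t s -> s = t.
  apply: (@Zorn T Rl).
  - by move=> s; apply/asboolP.
  - by move=> r s t /asboolP h1 /asboolP h2; apply/asboolP => x /h1 /h2.
  - move=> [s hs] [u hu] /asboolP /= h1 /asboolP /= h2.
    have e : s = u by apply/seteqP; split.
    subst u; congr exist; exact: Prop_irrelevance.
  - move=> A tot.
    pose ub := fun U => G U \/ exists2 s : T, A s & sval s U.
    have dub : dual_ideal ub.
      case: dG => oG [U0 hU0] nG uG mG.
      split.
      - move=> U [/oG //|[s _ hs]]; case: (svalP s) => [[op _ _ _ _] _]; exact: op hs.
      - by exists U0; left.
      - case=> [//|[s _ hs]]; by case: (svalP s) => [[_ _ n _ _] _].
      - move=> U V [hG|[s As hs]] oV sUV.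
        + by left; apply: uG hG oV sUV.
        + right; exists s => //; case: (svalP s) => [[_ _ _ u _] _]; exact: u hs oV sUV.
      - move=> U V [hU|[s As hs]] [hV|[t At ht]].
        + by left; apply: mG.
        + right; exists t => //; case: (svalP t) => [[_ _ _ _ m] sG]; apply: m => //; exact: sG.
        + right; exists s => //; case: (svalP s) => [[_ _ _ _ m] sG]; apply: m => //; exact: sG.
        + right; case: (tot s t As At) => /asboolP h.
          * exists t => //; case: (svalP t) => [[_ _ _ _ m] _]; apply: m => //; exact: h.
          * exists s => //; case: (svalP s) => [[_ _ _ _ m] _]; apply: m => //; exact: h.
    have Gub : G `<=` ub by move=> U hU; left.
    exists (exist _ ub (conj dub Gub)) => s As; apply/asboolP => U hU /=.
    by right; exists s.
case: (svalP t) => dt Gt.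
have qt : is_quasipoint (sval t).
  split => // B' dB' sB'.
  have Gb : G `<=` B' by move=> U /Gt /sB'.
  have := tmax (exist _ B' (conj dB' Gb)).
  by move=> /(_ (asboolT sB')) /(congr1 sval).
by exists (exist _ (sval t) qt).
Qed.

Lemma over_nbhs B x N : Defs.over B x -> open N -> N x -> qfam B N.
Proof.
move=> ov oN Nx; apply: qp_maxP => // V hV.
apply: (ov V hV); apply: open_nbhs_nbhs; by split.
Qed.

Lemma exists_over x : exists B : quasipoint M, Defs.over B x.
Proof.
pose G := fun U => open U /\ U x.
have dG : dual_ideal G.
  split.
  - by move=> U [].
  - by exists setT; split => //; exact: openT.
  - by case.
  - move=> U V [_ Ux] oV sUV; split => //; exact: sUV.
  - move=> U V [oU Ux] [oV Vx]; split; [exact: openI| by split].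
have [B sB] := qp_extend dG.
exists B => V hV N; rewrite nbhsE => -[N' [oN' N'x] sN'].
have hN' : qfam B N' by apply: sB.
have [y [Vy N'y]] := qp_neq0 (qp_meet hV hN').
by exists y; split => //; apply: sN'.
Qed.

Lemma dense_over U y : open U -> U y -> exists2 B : quasipoint M, Defs.over B y & qfam B U.
Proof.
move=> oU Uy; have [B hB] := exists_over y.
by exists B => //; apply: over_nbhs hB oU Uy.
Qed.

End QPBasics.
Section FE.
Variables (R : realType) (M : topologicalType).
Implicit Types (B : quasipoint M) (U V W : set M) (psi : M -> R).

Definition rbounded psi := exists r : R, forall x, `|psi x| <= r.
Definition rcont psi (x : M) := forall e : R, 0 < e ->
  exists N, [/\ open N, N x & forall y, N y -> `|psi y - psi x| < e].

Lemma spec_open psi l : open (spec_fam psi l).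
Proof. exact: open_interior. Qed.

Lemma spec_mono psi l l' : l <= l' -> spec_fam psi l `<=` spec_fam psi l'.
Proof. by move=> ll'; apply: interiorS => y /= h; apply: le_trans ll'. Qed.

Lemma Sf_up psi B l l' : qfam B (spec_fam psi l) -> l <= l' -> qfam B (spec_fam psi l').
Proof. by move=> h ll'; apply: (qp_up h (spec_open _ _) (spec_mono ll')). Qed.

Lemma Sf_lb psi B l : qfam B (spec_fam psi l) -> exists y, psi y <= l.
Proof. by move=> /qp_neq0 [y /interior_subset hy]; exists y. Qed.

Lemma Sf_top psi B r : (forall x, `|psi x| <= r) -> qfam B (spec_fam psi r).
Proof.
move=> hr; apply: (qp_up (qp_setT B) (spec_open _ _)).
rewrite -open_subsetE; last exact: openT.
by move=> x _ /=; apply: le_trans (hr x); apply: ler_norm.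
Qed.

Lemma has_inf_Sf psi B : rbounded psi -> has_inf [set l | qfam B (spec_fam psi l)].
Proof.
move=> [r hr]; split; first by exists r; apply: Sf_top.
exists (- r) => l /Sf_lb [y hy]; apply: le_trans hy.
by have := hr y; rewrite ler_norml => /andP [].
Qed.

Lemma fE_le psi B l : rbounded psi -> qfam B (spec_fam psi l) -> fE psi B <= l.
Proof. by move=> hb hl; apply: ge_inf => //; case: (has_inf_Sf B hb). Qed.

Lemma fE_ge psi B l : rbounded psi ->
  (forall l', qfam B (spec_fam psi l') -> l <= l') -> l <= fE psi B.
Proof. by move=> hb h; apply: lb_le_inf => //; case: (has_inf_Sf B hb). Qed.

Lemma fE_cont psi : rbounded psi -> forall B (e : R), 0 < e ->
  exists2 U, qfam B U & forall B', qfam B' U -> `|fE psi B' - fE psi B| < e.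
Proof.
move=> hb B e e0; set a := fE psi B.
have e20 : 0 < e / 2 by rewrite divr_gt0.
have [l hl la] := inf_adherent e20 (has_inf_Sf B hb).
have hup : qfam B (spec_fam psi (a + e / 2)) by apply: Sf_up hl (ltW la).
have nlo : ~ qfam B (spec_fam psi (a - e / 2)).
  move=> /(fE_le hb); rewrite -/a => h.
  lra.
have hW := qp_ext (spec_open _ _) nlo.
exists (spec_fam psi (a + e / 2) `&` interior (~` spec_fam psi (a - e / 2))).
  exact: qp_meet.
move=> B' hB'.
have h1 : fE psi B' <= a + e / 2.
  apply: fE_le => //; apply: qp_up hB' (spec_open _ _) _; by move=> x [].
have h2 : a - e / 2 <= fE psi B'.
  apply: fE_ge => // l' hl'; rewrite leNgt; apply/negP => hlt.
  have h3 := Sf_up hl' (ltW hlt).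
  apply: (qp_disj h3); apply: qp_up hB' (open_interior _) _; by move=> x [].
rewrite ltr_distlC; apply/andP; split; lra.
Qed.

Lemma fE_over psi B x : rbounded psi -> rcont psi x -> Defs.over B x -> fE psi B = psi x.
Proof.
move=> hb hc ov; apply/eqP; rewrite eq_le; apply/andP; split.
  apply/ler_addgt0Pr => e e0; apply: fE_le => //.
  have [N [oN Nx hN]] := hc e e0.
  apply: (qp_up (over_nbhs ov oN Nx) (spec_open _ _)).
  rewrite -open_subsetE // => y /hN; rewrite ltr_distlC => /andP [hh1 hh2] /=; lra.
apply: fE_ge => // l' hl'; rewrite leNgt; apply/negP => hlt.
have e0 : 0 < psi x - l' by rewrite subr_gt0.
have [N [oN Nx hN]] := hc _ e0.
have [y [/interior_subset /= hy Ny]] := ov _ hl' N (open_nbhs_nbhs (conj oN Nx)).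
have := hN y Ny; rewrite ltr_distlC => /andP [hh1 hh2].
lra.
Qed.

End FE.
Section CX.
Variables (R : realType) (M : topologicalType).
Implicit Types (B : quasipoint M) (U V W : set M).

Definition nC (z : R[i]) : R := Num.sqrt (complex.Re z ^+ 2 + complex.Im z ^+ 2).

Lemma normE (z : R[i]) : `|z| = (nC z)%:C%C.
Proof. by rewrite normc_def. Qed.

Lemma nC_ge0 z : 0 <= nC z.
Proof. exact: sqrtr_ge0. Qed.

Lemma nC_lt (z : R[i]) e : (`|z| < e%:C%C) = (nC z < e).
Proof. by rewrite normE ltcR. Qed.

Lemma nC_le (z : R[i]) e : (`|z| <= e%:C%C) = (nC z <= e).
Proof. by rewrite normE lecR. Qed.

Lemma nC_Re z : `|complex.Re z| <= nC z.
Proof. by rewrite -sqrtr_sqr; apply: ler_wsqrtr; rewrite lerDl sqr_ge0. Qed.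

Lemma nC_Im z : `|complex.Im z| <= nC z.
Proof. by rewrite -sqrtr_sqr; apply: ler_wsqrtr; rewrite lerDr sqr_ge0. Qed.

Lemma nC_le_ReIm z : nC z <= `|complex.Re z| + `|complex.Im z|.
Proof.
rewrite /nC -[X in _ <= X]ger0_norm ?addr_ge0 // -sqrtr_sqr; apply: ler_wsqrtr.
have h1 := real_normK (num_real (complex.Re z)).
have h2 := real_normK (num_real (complex.Im z)).
have p1 := normr_ge0 (complex.Re z). have p2 := normr_ge0 (complex.Im z).
rewrite -h1 -h2; nra.
Qed.

Lemma realCD (x y : R) : (x + y)%:C%C = x%:C%C + y%:C%C :> R[i].
Proof. by apply/eqP; rewrite eq_complex /= addr0 !eqxx. Qed.

Lemma realCM (x y : R) : (x * y)%:C%C = x%:C%C * y%:C%C :> R[i].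
Proof. by apply/eqP; rewrite eq_complex /= !mulr0 !mul0r subr0 addr0 !eqxx. Qed.

Lemma nC_triangle a b : nC (a + b) <= nC a + nC b.
Proof. by rewrite -lecR realCD -!normE ler_normD. Qed.

Lemma nC_M a b : nC (a * b) = nC a * nC b.
Proof. by apply: complexI; rewrite realCM -!normE normrM. Qed.

Lemma nC_conj a : nC (a^*) = nC a.
Proof. by apply: complexI; rewrite -!normE norm_conjC. Qed.

Lemma nC_distC a b : nC (a - b) = nC (b - a).
Proof. by apply: complexI; rewrite -!normE distrC. Qed.

Lemma ReB (a b : R[i]) : complex.Re (a - b) = complex.Re a - complex.Re b.
Proof. by case: a b => ? ? [? ?]. Qed.

Lemma ImB (a b : R[i]) : complex.Im (a - b) = complex.Im a - complex.Im b.
Proof. by case: a b => ? ? [? ?]. Qed.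

Lemma pos_real (eps : R[i]) : 0 < eps -> 0 < complex.Re eps /\ eps = (complex.Re eps)%:C%C.
Proof.
rewrite ltcE => /andP [/eqP hi hr]; split => //.
by case: eps hi hr => a b /= -> _.
Qed.

Lemma cont_eps (phi : M -> R[i]) x : continuous_at x (phi : M -> (R[i] : numClosedFieldType)) ->
  forall e : R, 0 < e -> exists N, [/\ open N, N x & forall y, N y -> nC (phi y - phi x) < e].
Proof.
move=> /cvgrPdist_lt h e e0.
have e0' : (0 : R[i]) < e%:C%C by rewrite ltcR.
have := h _ e0'; rewrite nbhsE => -[N [oN Nx] sN]; exists N; split => // y /sN /=.
by rewrite distrC nC_lt.
Qed.

Lemma eps_cont (phi : M -> R[i]) x :
  (forall e : R, 0 < e -> exists N, [/\ open N, N x & forall y, N y -> nC (phi y - phi x) < e]) ->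
  continuous_at x (phi : M -> (R[i] : numClosedFieldType)).
Proof.
move=> h; apply/cvgrPdist_lt => eps /pos_real [hr ->].
have [N [oN Nx hN]] := h _ hr.
have hx : nbhs x N by apply: open_nbhs_nbhs; split.
apply: filterS hx => y /hN.
by rewrite distrC nC_lt.
Qed.

Lemma Cb_nC (phi : M -> R[i]) : Cb phi -> exists r, forall x, nC (phi x) <= r.
Proof. by move=> [_ [r hr]]; exists r => x; rewrite -nC_le. Qed.

Lemma nC_Cb (phi : M -> R[i]) : (forall x, continuous_at x (phi : M -> (R[i] : numClosedFieldType))) ->
  (exists r, forall x, nC (phi x) <= r) -> Cb phi.
Proof. by move=> hc [r hr]; split => //; exists r => x; rewrite nC_le. Qed.

Lemma Cb_rbounded (phi : M -> R[i]) : Cb phi ->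
  rbounded (fun y => complex.Re (phi y)) /\ rbounded (fun y => complex.Im (phi y)).
Proof.
move=> /Cb_nC [r hr]; split; exists r => x.
  exact: le_trans (nC_Re _) (hr x).
exact: le_trans (nC_Im _) (hr x).
Qed.

Lemma Cb_rcont (phi : M -> R[i]) x : Cb phi ->
  rcont (fun y => complex.Re (phi y)) x /\ rcont (fun y => complex.Im (phi y)) x.
Proof.
move=> [hc _]; have h := cont_eps (hc x); split => e /h [N [oN Nx hN]];
  exists N; split => // y /hN; apply: le_lt_trans.
  by rewrite -ReB; apply: nC_Re.
by rewrite -ImB; apply: nC_Im.
Qed.

Lemma fstar_over (phi : M -> R[i]) B x : Cb phi -> Defs.over B x -> fstar phi B = phi x.
Proof.
move=> hC ov; have [b1 b2] := Cb_rbounded hC; have [c1 c2] := Cb_rcont x hC.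
rewrite /fstar (fE_over b1 c1 ov) (fE_over b2 c2 ov).
by case: (phi x).
Qed.

Lemma fstar_qcont (phi : M -> R[i]) : Cb phi -> qcontinuous (fstar phi).
Proof.
move=> hC B e e0; have [b1 b2] := Cb_rbounded hC.
have e20 : 0 < e / 2 by rewrite divr_gt0.
have [U1 h1 s1] := fE_cont b1 B e20.
have [U2 h2 s2] := fE_cont b2 B e20.
exists (U1 `&` U2); first exact: qp_meet.
move=> B' hB'.
have := s1 B' (qp_up hB' (qp_open h1) (@subIsetl _ _ _)).
have := s2 B' (qp_up hB' (qp_open h2) (@subIsetr _ _ _)).
rewrite nC_lt => q2 q1; apply: le_lt_trans (nC_le_ReIm _) _.
rewrite ReB ImB /=; lra.
Qed.

Definition QF B := filter_from (qfam B) (fun U => [set B' : quasipoint M | qfam B' U]).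

Instance QF_proper B : ProperFilter (QF B).
Proof.
apply: filter_from_proper; first apply: filter_from_filter.
- by exists setT; exact: qp_setT.
- move=> U V hU hV; exists (U `&` V); first exact: qp_meet.
  move=> B' h; split.
    exact: qp_up h (qp_open hU) (@subIsetl _ _ _).
  exact: qp_up h (qp_open hV) (@subIsetr _ _ _).
- move=> U hU; have [y Uy] := qp_neq0 hU.
  by have [B' _ h] := dense_over (qp_open hU) Uy; exists B'.
Qed.

Lemma qcont_cvg (psi : quasipoint M -> R[i]) :
  qcontinuous psi <-> forall B, (psi : quasipoint M -> (R[i] : numClosedFieldType)) @ QF B --> (psi B : (R[i] : numClosedFieldType)).
Proof.
split.
  move=> h B; apply/cvgrPdist_lt => eps /pos_real [hr ->].
  have [U hU sU] := h B _ hr.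
  by exists U => // B' /sU; rewrite distrC.
move=> h B e e0.
have e0' : (0 : R[i]) < e%:C%C by rewrite ltcR.
have [U hU sU] := (proj1 (cvgrPdist_lt _ _)) (h B) _ e0'.
by exists U => // B' /sU; rewrite distrC.
Qed.

Lemma qcont_eq (f g : quasipoint M -> R[i]) : qcontinuous f -> qcontinuous g ->
  (forall B x, Defs.over B x -> f B = g B) -> f = g.
Proof.
move=> /qcont_cvg hf /qcont_cvg hg he; apply: funext => B.
have h : ((fun t => f t - g t) : quasipoint M -> (R[i] : numClosedFieldType)) @ QF B -->
    (f B - g B : (R[i] : numClosedFieldType)) by apply: cvgB.
apply/eqP; rewrite -subr_eq0; apply: contraT => hne.
have d0 : 0 < `|f B - g B| by rewrite normr_gt0.
have [U hU sU] := (proj1 (cvgrPdist_lt _ _)) h _ d0.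
have [y Uy] := qp_neq0 hU.
have [B' ov hB'] := dense_over (qp_open hU) Uy.
have := sU B' hB'; rewrite /= (he B' y ov) subrr subr0.
by rewrite ltxx.
Qed.

Lemma qcont_conj (f : quasipoint M -> R[i]) : qcontinuous f ->
  qcontinuous (fun B => (f B)^*).
Proof.
move=> h B e e0; have [U hU sU] := h B e e0; exists U => // B' /sU.
by rewrite -rmorphB norm_conjC.
Qed.

Lemma Cb_add (phi chi : M -> R[i]) : Cb phi -> Cb chi -> Cb (fun x : M => phi x + chi x).
Proof.
move=> h1 h2; have [r1 b1] := Cb_nC h1; have [r2 b2] := Cb_nC h2.
apply: nC_Cb.
  by move=> x; apply: cvgD; [exact: (proj1 h1 x)|exact: (proj1 h2 x)].
exists (r1 + r2) => x; apply: le_trans (nC_triangle _ _) _; exact: lerD.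
Qed.

Lemma Cb_mul (phi chi : M -> R[i]) : Cb phi -> Cb chi -> Cb (fun x : M => phi x * chi x).
Proof.
move=> h1 h2; have [r1 b1] := Cb_nC h1; have [r2 b2] := Cb_nC h2.
apply: nC_Cb.
  by move=> x; apply: cvgM; [exact: (proj1 h1 x)|exact: (proj1 h2 x)].
exists (r1 * r2) => x; rewrite nC_M; apply: ler_pM => //; exact: nC_ge0.
Qed.

Lemma Cb_scale (c : R[i]) (phi : M -> R[i]) : Cb phi -> Cb (fun x : M => c * phi x).
Proof.
move=> h1; have [r1 b1] := Cb_nC h1.
apply: nC_Cb.
  by move=> x; apply: cvgM; [exact: cvg_cst|exact: (proj1 h1 x)].
exists (nC c * r1) => x; rewrite nC_M; apply: ler_wpM2l => //; exact: nC_ge0.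
Qed.

Lemma Cb_conj (phi : M -> R[i]) : Cb phi -> Cb (fun x : M => (phi x)^*).
Proof.
move=> h1; have [r1 b1] := Cb_nC h1.
apply: nC_Cb; last by exists r1 => x; rewrite nC_conj.
move=> x; apply: eps_cont => e /(cont_eps (proj1 h1 x)) [N [oN Nx hN]].
by exists N; split => // y /hN; rewrite -rmorphB nC_conj.
Qed.

End CX.
#[global] Existing Instance QF_proper.
Section Main.
Variables (R : realType) (M : topologicalType).
Implicit Types (B : quasipoint M) (U V W : set M).

Definition Bq (y : M) : quasipoint M := projT1 (cid (exists_over y)).
Lemma Bq_over y : Defs.over (Bq y) y.
Proof. exact: (projT2 (cid (exists_over y))). Qed.

Lemma surj (psi : quasipoint M -> R[i]) : Cpt psi -> exists2 phi, Cb phi & fstar phi = psi.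
Proof.
move=> [qc pc].
pose phi := fun y => psi (Bq y).
have phiE : forall B y, Defs.over B y -> psi B = phi y.
  move=> B y ov; have := pc B (Bq y) y ov; apply; exact: Bq_over.
have bnd : exists K : R, forall B, nC (psi B) <= K.
  apply: contrapT => H.
  have H' : forall K, exists B, K < nC (psi B).
    move=> K; apply: contra_notP H => H2; exists K => B.
    by rewrite leNgt; apply/negP => h; apply: H2; exists B.
  pose G := fun V => open V /\ exists K : R, forall B', K < nC (psi B') -> qfam B' V.
  have dG : dual_ideal G.
    split.
    - by move=> V [].
    - by exists setT; split; [exact: openT| exists 0 => B' _; exact: qp_setT].
    - move=> [_ [K hK]]; have [B hB] := H' K; exact: (qp_set0 (hK B hB)).
    - move=> U V [_ [K hK]] oV sUV; split => //; exists K => B' /hK hU.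
      exact: qp_up hU oV sUV.
    - move=> U V [oU [K1 h1]] [oV [K2 h2]]; split; first exact: openI.
      exists (Num.max K1 K2) => B'; rewrite gt_max => /andP [/h1 ? /h2 ?].
      exact: qp_meet.
  have [Bs sG] := qp_extend dG.
  have [U hU hUc] := qc Bs 1 ltr01.
  have : G (interior (~` U)).
    split; first exact: open_interior.
    exists (nC (psi Bs) + 1) => B' hB'; apply: qp_ext (qp_open hU) _ => hU'.
    have := hUc B' hU'; rewrite nC_lt => h.
    have := nC_triangle (psi B' - psi Bs) (psi Bs); rewrite subrK => h2.
    lra.
  by move/sG; apply: qp_disj hU.
have [K hK] := bnd.
have cphi : forall x, continuous_at x (phi : M -> (R[i] : numClosedFieldType)).
  move=> x; apply: eps_cont => e e0.
  apply: contrapT => H.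
  have H' : forall N, open N -> N x -> exists y, N y /\ e <= nC (phi y - phi x).
    move=> N oN Nx; apply: contra_notP H => H2; exists N; split => // y Ny.
    by rewrite ltNge; apply/negP => h; apply: H2; exists y.
  pose G := fun V => open V /\ exists N, [/\ open N, N x &
    forall y (B' : quasipoint M), N y -> e <= nC (phi y - phi x) -> Defs.over B' y -> qfam B' V].
  have dG : dual_ideal G.
    split.
    - by move=> V [].
    - exists setT; split; first exact: openT.
      by exists setT; split => //; [exact: openT| move=> *; exact: qp_setT].
    - move=> [_ [N [oN Nx hN]]]; have [y [Ny hy]] := H' N oN Nx.
      exact: (qp_set0 (hN y (Bq y) Ny hy (@Bq_over y))).
    - move=> U V [_ [N [oN Nx hN]]] oV sUV; split => //; exists N; split => //.
      move=> y B' Ny hy ov; exact: qp_up (hN y B' Ny hy ov) oV sUV.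
    - move=> U V [oU [N1 [oN1 N1x h1]]] [oV [N2 [oN2 N2x h2]]]; split; first exact: openI.
      exists (N1 `&` N2); split; [exact: openI| by split|].
      move=> y B' [Ny1 Ny2] hy ov; apply: qp_meet; [exact: (h1 y B' Ny1 hy ov)|exact: (h2 y B' Ny2 hy ov)].
  have [Bs sG] := qp_extend dG.
  have ovs : Defs.over Bs x.
    move=> V hV P; rewrite nbhsE => -[N' [oN' N'x] sN'].
    have GN' : G N'.
      split => //; exists N'; split => // y B' Ny _ ov; exact: over_nbhs ov oN' Ny.
    have [y [Vy Ny]] := qp_neq0 (qp_meet hV (sG _ GN')).
    by exists y; split => //; apply: sN'.
  have [U hU hUc] := qc Bs e e0.
  have : G (interior (~` U)).
    split; first exact: open_interior.
    exists setT; split => //; first exact: openT.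
    move=> y B' _ hy ov; apply: qp_ext (qp_open hU) _ => hU'.
    have := hUc B' hU'; rewrite nC_lt (phiE _ _ ov) (phiE _ _ ovs) => h.
    by move: hy; rewrite leNgt h.
  by move/sG; apply: qp_disj hU.
have Cphi : Cb phi by apply: nC_Cb => //; exists K => x; apply: hK.
exists phi => //.
apply: qcont_eq (fstar_qcont Cphi) qc _ => B y ov.
by rewrite (fstar_over Cphi ov) (phiE _ _ ov).
Qed.

End Main.

Theorem theorem2p45 (R : realType) (M : topologicalType) (HM : hausdorff_space M) :
  (* f_* maps C_b(M) into C^pt(Q(T(M))) *)
  (forall phi : M -> R[i], Cb phi -> Cpt (fstar phi)) /\
  (* f_* is a *-homomorphism *)
  (forall phi chi : M -> R[i], Cb phi -> Cb chi ->
     fstar (fun x => phi x + chi x) = (fun B => fstar phi B + fstar chi B)) /\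
  (forall phi chi : M -> R[i], Cb phi -> Cb chi ->
     fstar (fun x => phi x * chi x) = (fun B => fstar phi B * fstar chi B)) /\
  (forall (c : R[i]) (phi : M -> R[i]), Cb phi ->
     fstar (fun x => c * phi x) = (fun B => c * fstar phi B)) /\
  (forall phi : M -> R[i], Cb phi ->
     fstar (fun x => (phi x)^*) = (fun B => (fstar phi B)^*)) /\
  (* f_* is injective on C_b(M) *)
  (forall phi chi : M -> R[i], Cb phi -> Cb chi -> fstar phi = fstar chi -> phi = chi) /\
  (* f_* is onto C^pt(Q(T(M))) *)
  (forall psi : quasipoint M -> R[i], Cpt psi -> exists2 phi, Cb phi & fstar phi = psi).
Proof.
split.
  move=> phi hC; split; first exact: fstar_qcont.
  by move=> B1 B2 x o1 o2; rewrite (fstar_over hC o1) (fstar_over hC o2).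
split.
  move=> phi chi h1 h2; have h := Cb_add h1 h2.
  apply: qcont_eq (fstar_qcont h) _ _.
    apply/qcont_cvg => B; apply: cvgD; [exact: ((qcont_cvg _).1 (fstar_qcont h1) B)|exact: ((qcont_cvg _).1 (fstar_qcont h2) B)].
  by move=> B x ov; rewrite (fstar_over h ov) (fstar_over h1 ov) (fstar_over h2 ov).
split.
  move=> phi chi h1 h2; have h := Cb_mul h1 h2.
  apply: qcont_eq (fstar_qcont h) _ _.
    apply/qcont_cvg => B; apply: cvgM; [exact: ((qcont_cvg _).1 (fstar_qcont h1) B)|exact: ((qcont_cvg _).1 (fstar_qcont h2) B)].
  by move=> B x ov; rewrite (fstar_over h ov) (fstar_over h1 ov) (fstar_over h2 ov).
split.
  move=> c phi h1; have h := Cb_scale c h1.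
  apply: qcont_eq (fstar_qcont h) _ _.
    apply/qcont_cvg => B; apply: cvgM; [exact: cvg_cst| exact: ((qcont_cvg _).1 (fstar_qcont h1) B)].
  by move=> B x ov; rewrite (fstar_over h ov) (fstar_over h1 ov).
split.
  move=> phi h1; have h := Cb_conj h1.
  apply: qcont_eq (fstar_qcont h) _ _.
    exact: (qcont_conj (fstar_qcont h1)).
  by move=> B x ov; rewrite (fstar_over h ov) (fstar_over h1 ov).
split.
  move=> phi chi h1 h2 e; apply: funext => x.
  have [B ov] := exists_over x.
  by rewrite -(fstar_over h1 ov) -(fstar_over h2 ov) e.
exact: surj.
Qed.
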